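(* Let $K=[s,t]$ with $0<s<t<\xi$. There are constants $C=C(K)>0$ and $D\ge0$ such that for every $\sigma\in\mathcal A^*$ with $\pi(\sigma)\in K$, $$\|M(\sigma)\|_1\le C|\sigma|^D\eta(\sigma),$$ where $\|\cdot\|_1$ is the operator norm induced by the $\ell^1$ norm.
   Context: Fix integers $d\ge 3$ and $m\ge d$ and a probability vector $\mathbf p=(p_0,\dots,p_m)$ with all $p_i>0$ which is regular, normalized so that $p_0\le p_m\le p_i$ for all $1\le i\le m-1$. Let $\mathcal A=\{0,\dots,m\}$, $\mathcal A^k$ the set of words of length $k$, $\mathcal A^*=\bigcup_{k\ge0}\mathcal A^k$, $|\sigma|$ the length of $\sigma$. Put $\xi=m/(d-1)$. Define $\pi(\sigma)=\sum_{i=1}^{|\sigma|}\sigma_i d^{-i}$. For $\sigma\in\mathcal A^k$ let $\mathbf p(\sigma)=\prod_{j=1}^k p_{\sigma_j}$ and $\eta(\sigma)=\sum\{\mathbf p(\sigma'):\sigma'\in\mathcal A^k,\ \pi(\sigma')=\pi(\sigma)\}$. Let $a=1+\lfloor (m-d)/(d-1)\rfloor$, set $p_j=0$ for $j\notin\mathcal A$, and let $M_i$ ($i\in\mathcal A$) be the $(2a+1)\times(2a+1)$ matrix indexed by $\{-a,\dots,a\}^2$ with $M_i(k,l)=p_{k+i-ld}$; $M(\sigma)=M_{\sigma_k}\cdots M_{\sigma_1}$ for $\sigma\in\mathcal A^k$. *)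

(* Defs.v *)
From HB Require Import structures.
From mathcomp Require Import all_boot all_order all_algebra.
From mathcomp Require Import all_classical all_reals exp.
Set Implicit Arguments. Unset Strict Implicit. Unset Printing Implicit Defensive.
Import Order.TTheory GRing.Theory Num.Theory.
Local Open Scope ring_scope.

Section Defs.
Variable R : realType.
Variables (d m : nat).
Notation A := 'I_m.+1.
Variable p : A -> R.

Definition piw (s : seq A) : R :=
  \sum_(i < size s) (nth ord0 s i)%:R / (d%:R ^+ i.+1).

Definition pw (s : seq A) : R := \prod_(x <- s) p x.

Definition etaw (s : seq A) : R :=
  \sum_(t : (size s).-tuple A | piw t == piw s) pw t.

Definition aa : nat := (1 + (m - d) %/ (d - 1))%N.

Definition pz (j : int) : R :=
  match j with
  | Posz n => if (n <= m)%N then p (inord n) else 0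
  | Negz _ => 0
  end.

(* matrices indexed by {-a,...,a}; index r : 'I_(2a+1) stands for r - a *)
Definition idx (r : 'I_(aa.*2.+1)) : int := (r%:Z - aa%:Z)%R.

Definition Mi (i : A) : 'M[R]_(aa.*2.+1) :=
  \matrix_(k, l) pz (idx k + (i : nat)%:Z - idx l * d%:Z).

(* M(sigma) = M_{sigma_k} ... M_{sigma_1} *)
Definition Mw (s : seq A) : 'M[R]_(aa.*2.+1) :=
  foldl (fun acc i => Mi i *m acc) 1%:M s.

End Defs.

Definition norm1 (R : realType) n (x : 'cV[R]_n) : R := \sum_i `|x i 0|.
Definition opnorm1 (R : realType) n (B : 'M[R]_n) : R :=
  sup [set norm1 (B *m x) | x in [set x : 'cV[R]_n | norm1 x <= 1]]%classic.

(* Main.v *)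
Require Import Defs.
From HB Require Import structures.
From mathcomp Require Import all_boot all_order all_algebra.
From mathcomp Require Import all_classical all_reals exp.
From mathcomp Require Import zify ring lra.
Import Order.TTheory GRing.Theory Num.Theory.
Local Open Scope ring_scope.

Lemma opnorm_le (R : realType) n (B : 'M[R]_n) : opnorm1 B <= \sum_i \sum_j `|B i j|.
Proof.
rewrite /opnorm1; apply: ge_sup.
  exists (norm1 (B *m 0)); exists 0 => //.
  by rewrite /= /norm1 big1 // => i _; rewrite mxE normr0.
move=> _ [x hx <-]; rewrite /norm1; apply: ler_sum => i _.
rewrite mxE; apply: le_trans (ler_norm_sum _ _ _) _.
apply: ler_sum => j _; rewrite normrM -[leRHS]mulr1; apply: ler_wpM2l => //.
apply: le_trans hx.
by rewrite /norm1 (bigD1 j) //= lerDl sumr_ge0.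
Qed.

Lemma mulrnn (R : numDomainType) (x : R) k : x *+ k *+ k = k%:R ^+ 2 * x.
Proof. by rewrite -mulrnA expr2 -natrM mulr_natl. Qed.

Section S.
Variable R : realType.
Variables d m : nat.
Variable p : 'I_m.+1 -> R.
Local Notation N := (aa d m).*2.+1.
Local Notation ix := (@idx d m).
Local Notation MM := (Mw d p).

Lemma sum_ind_le1 n (P : pred 'I_n) :
  (forall i j, P i -> P j -> i = j) -> \sum_i (P i)%:R <= (1:R).
Proof.
move=> hu; case: (pickP P) => [j0 Pj0|P0].
  rewrite (bigD1 j0) //= Pj0 big1 ?addr0 // => i neq.
  case: (boolP (P i)) => Pi //.
  by rewrite (hu _ _ Pi Pj0) eqxx in neq.
by rewrite big1 // => i _; rewrite P0.
Qed.

Lemma idx_inj : injective ix.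
Proof.
move=> i j; rewrite /idx => /addIr /eqP; rewrite eqz_nat => /eqP h.
exact: val_inj.
Qed.

Lemma idx_ex (e : int) : - (aa d m)%:Z <= e -> e <= (aa d m)%:Z ->
  exists k : 'I_N, ix k = e.
Proof.
move=> h1 h2.
have hn : (absz (e + (aa d m)%:Z)%R < N)%N by lia.
exists (Ordinal hn); rewrite /idx /=; lia.
Qed.

Lemma idx_bnd (k : 'I_N) : - (aa d m)%:Z <= ix k /\ ix k <= (aa d m)%:Z.
Proof. have := ltn_ord k; rewrite /idx; lia. Qed.

Lemma pz_ge0 (hpos : forall i, 0 < p i) c : 0 <= pz p c.
Proof. by case: c => [n|n] //=; case: ifP => _ //; exact: ltW. Qed.

Lemma pz_out c : (c < 0) || (m%:Z < c) -> pz p c = 0.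
Proof.
case: c => [n|n] //= h; case: ifP => //; lia.
Qed.

Lemma pz_in c : 0 <= c -> c <= m%:Z -> pz p c = p (inord (absz c)).
Proof. case: c => [n|n] //= h1 h2; case: ifP => //; lia. Qed.

Lemma pz_sum c : pz p c = \sum_(y : 'I_m.+1) (c == (y : nat)%:Z)%:R * p y.
Proof.
case: (boolP ((c < 0) || (m%:Z < c))) => h.
  rewrite pz_out // big1 // => y _.
  case: eqP => [e|_]; last by rewrite mul0r.
  have := ltn_ord y; lia.
have [h1 h2] : 0 <= c /\ c <= m%:Z by lia.
rewrite pz_in // (bigD1 (inord (absz c))) //= big1.
  rewrite addr0 inordK; last by lia.
  have -> : (c == (absz c)%:Z) by lia.
  by rewrite mul1r.
move=> y hy; case: eqP => [e|_]; last by rewrite mul0r.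
exfalso; move/eqP: hy; apply; apply: val_inj; rewrite /= inordK; lia.
Qed.

Lemma Mi_E i k l : Mi d p i k l = pz p (ix k + (i : nat)%:Z - ix l * d%:Z).
Proof. by rewrite mxE. Qed.

Lemma Mw_rcons s i : MM (rcons s i) = Mi d p i *m MM s.
Proof. by rewrite /Mw foldl_rcons. Qed.

Lemma foldlM s B : foldl (fun (acc : 'M[R]_N) i => Mi d p i *m acc) B s = MM s *m B.
Proof.
elim: s B => [|x s IH] B /=; first by rewrite /Mw /= mul1mx.
by rewrite IH [in RHS]/Mw /= IH mulmx1 mulmxA.
Qed.

Lemma Mw_cons x s : MM (x :: s) = MM s *m Mi d p x.
Proof. by rewrite {1}/Mw /= foldlM mulmx1. Qed.

Lemma Mw_cat s1 s2 : MM (s1 ++ s2) = MM s2 *m MM s1.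
Proof. by rewrite /Mw foldl_cat -/(Mw d p s1) foldlM. Qed.


Hypothesis hd : (3 <= d)%N.
Hypothesis hm : (d <= m)%N.
Hypothesis hpos : forall i, 0 < p i.
Hypothesis hsum : \sum_i p i = 1.
Hypothesis h0m : p ord0 <= p ord_max.
Hypothesis hmi : forall i : 'I_m.+1, (0 < i)%N -> (i < m)%N -> p ord_max <= p i.

Lemma Mi_ge0 i k l : 0 <= Mi d p i k l.
Proof. by rewrite Mi_E pz_ge0. Qed.

Lemma Mw0E k l : MM [::] k l = (k == l)%:R.
Proof. by rewrite /Mw /= mxE. Qed.

Lemma Mw_ge0 s k l : 0 <= MM s k l.
Proof.
elim/last_ind: s k l => [|s x IH] k l.
  by rewrite Mw0E ler0n.
rewrite Mw_rcons mxE; apply: sumr_ge0 => j _.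
by rewrite Mi_E mulr_ge0 // pz_ge0.
Qed.

Lemma sum_pz_le1 (c : int) : \sum_(j : 'I_N) pz p (ix j + c) <= 1.
Proof.
under eq_bigr => j _ do rewrite pz_sum.
rewrite exchange_big /= -[X in _ <= X]hsum; apply: ler_sum => y _.
rewrite -mulr_suml -[leRHS]mul1r; apply: ler_wpM2r; first exact: ltW.
have := (@sum_ind_le1 N (fun j : 'I_N => ix j + c == (y:nat)%:Z)); apply => i j /eqP hi /eqP hj.
by apply: idx_inj; apply: (addIr c); rewrite hi hj.
Qed.

Lemma Mw_le1 s k l : MM s k l <= 1.
Proof.
elim: s k l => [|x s IH] k l.
  by rewrite Mw0E; case: eqP.
rewrite Mw_cons mxE; apply: le_trans (sum_pz_le1 ((x:nat)%:Z - ix l * d%:Z)).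
apply: ler_sum => j _; rewrite Mi_E -[leRHS]mul1r addrA.
by apply: ler_wpM2r; [exact: pz_ge0|exact: IH].
Qed.


Definition o0 : 'I_N := inord (aa d m).

Lemma ix_o0 : ix o0 = 0.
Proof.
rewrite /idx /o0 inordK; first by rewrite subrr.
by rewrite ltnS -addnn leq_addr.
Qed.

Lemma term_le_sum n (F : 'I_n -> R) j : (forall i, 0 <= F i) -> F j <= \sum_i F i.
Proof. by move=> h; rewrite (bigD1 j) //= lerDl sumr_ge0 // => i _; exact: h. Qed.

Lemma pz0_le : pz p 0 <= pz p (d%:Z - 1).
Proof.
rewrite pz_in // pz_in; [|lia|lia].
have -> : (inord (absz 0) : 'I_m.+1) = ord0 by apply/val_inj; rewrite /= inordK.
apply: le_trans h0m _; apply: hmi; rewrite inordK; lia.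
Qed.

Lemma pzm_le : pz p m%:Z <= pz p (m%:Z + 1 - d%:Z).
Proof.
rewrite pz_in // pz_in; [|lia|lia].
have -> : (inord (absz m) : 'I_m.+1) = ord_max by apply/val_inj; rewrite /= inordK.
apply: hmi; rewrite inordK; lia.
Qed.

Lemma pz_step (rho : R) (hrho : forall i j, p i <= rho * p j) c c' :
  0 <= c <= m%:Z -> 0 <= c' <= m%:Z -> pz p c <= rho * pz p c'.
Proof. by move=> /andP[h1 h2] /andP[h3 h4]; rewrite !pz_in. Qed.

Lemma decr (rho : R) (hr0 : 0 <= rho) (hrho : forall i j, p i <= rho * p j) s :
  forall k k1 : 'I_N, ix k1 = ix k - 1 -> 0 < ix k ->
  MM s k o0 <= rho * (size s)%:R * MM s k1 o0.
Proof.
elim/last_ind: s => [|s x IH] k k1 hk1 hk.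
  have : k != o0 by apply/eqP => e; move: hk; rewrite e ix_o0.
  by rewrite Mw0E => /negbTE ->; rewrite mulr0 mul0r.
rewrite !Mw_rcons !mxE size_rcons.
set X := \sum_j Mi d p x k1 j * _.
have hX : 0 <= X by apply: sumr_ge0 => j _; rewrite mulr_ge0 ?Mw_ge0 // Mi_E pz_ge0.
set n := size s.
have key : forall j, Mi d p x k j * MM s j o0 <= rho * (Mi d p x k1 j * MM s j o0)
   + rho * n%:R * X * ((ix k + (x:nat)%:Z - ix j * d%:Z == 0))%:R.
  move=> j; rewrite !Mi_E.
  have hW := Mw_ge0 s j o0.
  set c := ix k + (x:nat)%:Z - ix j * d%:Z.
  have -> : ix k1 + (x:nat)%:Z - ix j * d%:Z = c - 1 by rewrite /c hk1; lia.
  case: (boolP (c == 0)) => hc.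
    rewrite mulr1 (eqP hc) (pz_out (-1)) // mul0r mulr0 add0r.
    have hj : 0 < ix j.
      have : ix j * d%:Z = ix k + (x:nat)%:Z by move/eqP: hc; rewrite /c; lia.
      move=> e; have := ltn_ord x; nia.
    have [j2 hj2] : exists j2, ix j2 = ix j - 1.
      by apply: idx_ex; have := idx_bnd j; lia.
    have h1 := IH j j2 hj2 hj.
    have h2 : pz p (d%:Z - 1) * MM s j2 o0 <= X.
      have -> : d%:Z - 1 = ix k1 + (x:nat)%:Z - ix j2 * d%:Z.
        by rewrite hj2 hk1; move/eqP: hc; rewrite /c; lia.
      have := @term_le_sum N (fun j => Mi d p x k1 j * MM s j o0) j2.
      rewrite /= Mi_E -/X; apply => i.
      by rewrite mulr_ge0 ?Mw_ge0 // Mi_E pz_ge0.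
    have h3 := pz0_le.
    have h4 := pz_ge0 hpos 0.
    have h5 := Mw_ge0 s j2 o0.
    have h6 : 0 <= rho * n%:R by rewrite mulr_ge0.
    apply: le_trans (ler_wpM2l h4 h1) _.
    have h7 : pz p 0 * MM s j2 o0 <= X := le_trans (ler_wpM2r h5 h3) h2.
    by rewrite mulrCA; apply: ler_wpM2l.
  rewrite mulr0 addr0.
  case: (boolP ((0 < c) && (c <= m%:Z))) => h.
    rewrite mulrA; apply: ler_wpM2r => //; apply: pz_step => //; lia.
  rewrite pz_out ?mul0r; last by lia.
  by rewrite mulr_ge0 // mulr_ge0 // pz_ge0.
apply: le_trans (ler_sum _ (fun j _ => key j)) _.
rewrite big_split /= -!mulr_sumr.
have hS : \sum_(j : 'I_N) ((ix k + (x:nat)%:Z - ix j * d%:Z == 0))%:R <= (1:R).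
  have := (@sum_ind_le1 N (fun j : 'I_N => ix k + (x:nat)%:Z - ix j * d%:Z == 0)).
  apply => i j /eqP hi /eqP hj; apply: idx_inj.
  have hd0 : d%:Z != 0 by apply/eqP; lia.
  apply: (mulIf hd0); lia.
rewrite -natr1.
have hn : 0 <= n%:R :> R by [].
set S := \sum_j _ in hS *.
have hS0 : 0 <= S by apply: sumr_ge0.
rewrite -/X. have hh : 0 <= rho * n%:R * X by rewrite !mulr_ge0.
nra.
Qed.


Lemma incr (rho : R) (hr0 : 0 <= rho) (hrho : forall i j, p i <= rho * p j) s :
  forall k k1 : 'I_N, ix k1 = ix k + 1 -> ix k < 0 ->
  MM s k o0 <= rho * (size s)%:R * MM s k1 o0.
Proof.
elim/last_ind: s => [|s x IH] k k1 hk1 hk.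
  have : k != o0 by apply/eqP => e; move: hk; rewrite e ix_o0.
  by rewrite Mw0E => /negbTE ->; rewrite mulr0 mul0r.
rewrite !Mw_rcons !mxE size_rcons.
set X := \sum_j Mi d p x k1 j * _.
have hX : 0 <= X by apply: sumr_ge0 => j _; rewrite mulr_ge0 ?Mw_ge0 // Mi_E pz_ge0.
set n := size s.
have key : forall j, Mi d p x k j * MM s j o0 <= rho * (Mi d p x k1 j * MM s j o0)
   + rho * n%:R * X * ((ix k + (x:nat)%:Z - ix j * d%:Z == m%:Z))%:R.
  move=> j; rewrite !Mi_E.
  have hW := Mw_ge0 s j o0.
  set c := ix k + (x:nat)%:Z - ix j * d%:Z.
  have -> : ix k1 + (x:nat)%:Z - ix j * d%:Z = c + 1 by rewrite /c hk1; lia.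
  case: (boolP (c == m%:Z)) => hc.
    rewrite mulr1 (eqP hc) (pz_out (m%:Z + 1)); last by lia.
    rewrite mul0r mulr0 add0r.
    have hj : ix j < 0.
      have : ix j * d%:Z = ix k + (x:nat)%:Z - m%:Z by move/eqP: hc; rewrite /c; lia.
      move=> e; have := ltn_ord x; nia.
    have [j2 hj2] : exists j2, ix j2 = ix j + 1.
      by apply: idx_ex; have := idx_bnd j; lia.
    have h1 := IH j j2 hj2 hj.
    have h2 : pz p (m%:Z + 1 - d%:Z) * MM s j2 o0 <= X.
      have -> : m%:Z + 1 - d%:Z = ix k1 + (x:nat)%:Z - ix j2 * d%:Z.
        by rewrite hj2 hk1; move/eqP: hc; rewrite /c; lia.
      have := @term_le_sum N (fun j => Mi d p x k1 j * MM s j o0) j2.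
      rewrite /= Mi_E -/X; apply => i.
      by rewrite mulr_ge0 ?Mw_ge0 // Mi_E pz_ge0.
    have h3 := pzm_le.
    have h4 := pz_ge0 hpos m%:Z.
    have h5 := Mw_ge0 s j2 o0.
    have h6 : 0 <= rho * n%:R by rewrite mulr_ge0.
    apply: le_trans (ler_wpM2l h4 h1) _.
    have h7 : pz p m%:Z * MM s j2 o0 <= X := le_trans (ler_wpM2r h5 h3) h2.
    by rewrite mulrCA; apply: ler_wpM2l.
  rewrite mulr0 addr0.
  case: (boolP ((0 <= c) && (c < m%:Z))) => h.
    rewrite mulrA; apply: ler_wpM2r => //; apply: pz_step => //; lia.
  rewrite pz_out ?mul0r; last by lia.
  by rewrite mulr_ge0 // mulr_ge0 // pz_ge0.
apply: le_trans (ler_sum _ (fun j _ => key j)) _.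
rewrite big_split /= -!mulr_sumr.
have hS : \sum_(j : 'I_N) ((ix k + (x:nat)%:Z - ix j * d%:Z == m%:Z))%:R <= (1:R).
  have := (@sum_ind_le1 N (fun j : 'I_N => ix k + (x:nat)%:Z - ix j * d%:Z == m%:Z)).
  apply => i j /eqP hi /eqP hj; apply: idx_inj.
  have hd0 : d%:Z != 0 by apply/eqP; lia.
  apply: (mulIf hd0); lia.
rewrite -natr1.
have hn : 0 <= n%:R :> R by [].
set S := \sum_j _ in hS *.
have hS0 : 0 <= S by apply: sumr_ge0.
rewrite -/X. have hh : 0 <= rho * n%:R * X by rewrite !mulr_ge0.
nra.
Qed.


Lemma chain (K : R) (hK : 1 <= K) s
 (hdec : forall k k1, ix k1 = ix k - 1 -> 0 < ix k -> MM s k o0 <= K * MM s k1 o0)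
 (hinc : forall k k1, ix k1 = ix k + 1 -> ix k < 0 -> MM s k o0 <= K * MM s k1 o0) :
 forall k, MM s k o0 <= K ^+ (aa d m) * MM s o0 o0.
Proof.
have h00 := Mw_ge0 s o0 o0.
have gen : forall e : nat, forall k, absz (ix k) = e -> MM s k o0 <= K ^+ e * MM s o0 o0.
  elim => [|e IH] k hk.
    have -> : k = o0 by apply: idx_inj; rewrite ix_o0; lia.
    by rewrite expr0 mul1r.
  case: (ltrP 0 (ix k)) => hpos'.
    have [k1 hk1] : exists k1, ix k1 = ix k - 1 by apply: idx_ex; have := idx_bnd k; lia.
    apply: le_trans (hdec _ _ hk1 hpos') _.
    rewrite exprS -mulrA; apply: ler_wpM2l; first by apply: le_trans hK.
    by apply: IH; lia.
  have hneg : ix k < 0 by lia.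
  have [k1 hk1] : exists k1, ix k1 = ix k + 1 by apply: idx_ex; have := idx_bnd k; lia.
  apply: le_trans (hinc _ _ hk1 hneg) _.
  rewrite exprS -mulrA; apply: ler_wpM2l; first by apply: le_trans hK.
  by apply: IH; lia.
move=> k; apply: le_trans (gen _ k erefl) _.
apply: ler_wpM2r => //; apply: ler_weXn2l => //.
have := idx_bnd k; lia.
Qed.

Fixpoint V (w : seq 'I_m.+1) : nat :=
  if w is x :: w' then (x * d ^ size w' + V w')%N else 0%N.
Definition Mx n := (\sum_(i < n) m * d ^ i)%N.

Lemma V_rcons w x : V (rcons w x) = (d * V w + x)%N.
Proof.
elim: w => [|y w IH] /=; first by rewrite muln0 add0n expn0 muln1 addn0.
rewrite IH size_rcons expnS; ring.
Qed.

Lemma Mx_S n : Mx n.+1 = (d * Mx n + m)%N.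
Proof.
rewrite /Mx big_ord_recl /= expn0 muln1 big_distrr /= addnC; congr (_ + _)%N.
by apply: eq_bigr => i _; rewrite /bump /= add1n expnS; ring.
Qed.

Lemma Mx_Sr n : Mx n.+1 = (m * d ^ n + Mx n)%N.
Proof. by rewrite /Mx big_ord_recr /= addnC. Qed.

Lemma Mx0 : Mx 0 = 0%N.
Proof. by rewrite /Mx big_ord0. Qed.

Lemma V_le w : (V w <= Mx (size w))%N.
Proof.
elim: w => [|x w IH] /=; first by rewrite Mx0.
rewrite Mx_Sr; apply: leq_add => //; apply: leq_mul => //.
by rewrite -ltnS.
Qed.

Lemma aa_bnd : (aa d m + m < (aa d m).+1 * d)%N.
Proof.
have hd1 : (0 < d - 1)%N by lia.
have h1 := divn_eq (m - d) (d - 1).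
have h2 := ltn_pmod (m - d) hd1.
rewrite /aa; set q := ((m - d) %/ (d - 1))%N in h1 *.
set r := ((m - d) %% (d - 1))%N in h1 h2 *.
nia.
Qed.

Lemma Mw_lower (pm : R) (hpm0 : 0 <= pm) (hpm : forall i, pm <= p i) w :
  forall j : 'I_N, 0 <= (V w)%:Z + ix j -> (V w)%:Z + ix j <= (Mx (size w))%:Z ->
  pm ^+ size w <= MM w j o0.
Proof.
elim/last_ind: w => [|w x IH] j h1 h2.
  have -> : j = o0 by apply: idx_inj; rewrite ix_o0; move: h1 h2; rewrite /= Mx0; lia.
  by rewrite Mw0E eqxx expr0.
rewrite V_rcons size_rcons Mx_S in h1 h2.
set n := size w in h2 *.
have hVw := V_le w.
set U := ((d * V w + x)%N%:Z + ix j) in h1 h2.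
set u := absz U.
have hu : u%:Z = U by rewrite /u; lia.
have hdp : (0 < d)%N by lia.
have hdiv := divn_eq u d.
have hmod := ltn_pmod u hdp.
set W' := minn (u %/ d) (Mx n).
set tau := (u - d * W')%N.
have hq : (d * W' <= u)%N /\ (tau <= m)%N.
  rewrite /tau /W'; set q := (u %/ d)%N in hdiv *; set r := (u %% d)%N in hdiv hmod *.
  case: (leqP q (Mx n)) => hqm.
    nia.
  idtac.
  have : (d * Mx n <= d * q)%N by apply: leq_mul => //; lia.
  lia.
case: hq => hq1 hq2.
have e : d%:Z * (W'%:Z - (V w)%:Z) = (x:nat)%:Z + ix j - tau%:Z.
  rewrite /tau; move: hu; rewrite /U; lia.
have hab := aa_bnd.
have hx := ltn_ord x.
have [hj1 hj2] := idx_bnd j.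
have hb : - (aa d m)%:Z <= W'%:Z - (V w)%:Z /\ W'%:Z - (V w)%:Z <= (aa d m)%:Z.
  split.
    case: (lerP (- (aa d m)%:Z) (W'%:Z - (V w)%:Z)) => // hlt; nia.
  case: (lerP (W'%:Z - (V w)%:Z) (aa d m)%:Z) => // hlt; nia.
case: hb => hb1 hb2; have [k' hk'] := idx_ex _ hb1 hb2.
rewrite Mw_rcons mxE.
have := @term_le_sum N (fun k => Mi d p x j k * MM w k o0) k'.
move=> /(_ (fun i => mulr_ge0 (Mi_ge0 _ _ _) (Mw_ge0 _ _ _))).
rewrite /= Mi_E => hle; apply: le_trans hle.
have -> : ix j + (x:nat)%:Z - ix k' * d%:Z = tau%:Z by rewrite hk'; lia.
rewrite size_rcons exprS; apply: ler_pM => //; first exact: exprn_ge0.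
  by rewrite pz_in //; lia.
apply: IH; rewrite hk'.
  by lia.
have : (W' <= Mx n)%N by rewrite /W'; lia.
rewrite -/n; lia.
Qed.


Lemma sum_tuple_cons n (F : n.+1.-tuple 'I_m.+1 -> R) :
  \sum_(t : n.+1.-tuple 'I_m.+1) F t =
  \sum_(x : 'I_m.+1) \sum_(t : n.-tuple 'I_m.+1) F [tuple of x :: t].
Proof.
rewrite (partition_big (@thead _ _) xpredT) //=; apply: eq_bigr => x _.
rewrite (reindex (fun t : n.-tuple _ => [tuple of x :: t])) /=; last first.
  pose ttail (t : n.+1.-tuple 'I_m.+1) := [tuple of behead t].
  exists ttail => [t _ | t /eqP <-]; first exact: val_inj.
  by rewrite -tuple_eta.
by apply: eq_bigl => t; rewrite theadE eqxx.
Qed.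

Lemma pw_cons x w : pw p (x :: w) = p x * pw p w.
Proof. by rewrite /pw big_cons. Qed.

Lemma pw_ge0 w : 0 <= pw p w.
Proof. by rewrite /pw; apply: prodr_ge0 => i _; exact: ltW. Qed.

Lemma Mw_le_tuple s : forall k l, MM s k l <=
  \sum_(t : (size s).-tuple 'I_m.+1) pw p t *
     (((V t)%:Z + ix l * (d ^ size s)%:Z == (V s)%:Z + ix k))%:R.
Proof.
elim: s => [|x s IH] k l.
  rewrite Mw0E (bigD1 [tuple]) //= big1 ?addr0; last first.
    by move=> t /eqP ht; exfalso; apply: ht; exact: tuple0.
  rewrite /pw big_nil mul1r; have [->|_] := eqVneq k l; last by rewrite ler0n.
  by rewrite /= expn0 mulr1 !add0r eqxx.
rewrite Mw_cons mxE /= sum_tuple_cons.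
set n := size s.
pose A (t : n.-tuple 'I_m.+1) (j : 'I_N) :=
  (((V t)%:Z + ix j * (d ^ n)%:Z == (V s)%:Z + ix k))%:R : R.
pose B (y : 'I_m.+1) (j : 'I_N) :=
  ((ix j + (x:nat)%:Z - ix l * d%:Z == (y:nat)%:Z))%:R : R.
have step1 : forall j, MM s k j * Mi d p x j l <=
    \sum_(t : n.-tuple 'I_m.+1) \sum_(y : 'I_m.+1) (p y * pw p t) * (A t j * B y j).
  move=> j; apply: le_trans (ler_wpM2r (Mi_ge0 _ _ _) (IH k j)) _.
  rewrite Mi_E pz_sum mulr_suml; apply: ler_sum => t _.
  rewrite mulr_sumr; apply: ler_sum => y _.
  rewrite /A /B; set a := (_ == _)%:R; set b := (_ == _)%:R.
  by rewrite le_eqVlt; apply/orP; left; apply/eqP; ring.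
apply: le_trans (ler_sum _ (fun j _ => step1 j)) _.
rewrite exchange_big /=.
under eq_bigr => t _ do rewrite exchange_big.
rewrite exchange_big /=; apply: ler_sum => y _; apply: ler_sum => t _.
rewrite -mulr_sumr pw_cons.
apply: ler_wpM2l; first by rewrite mulr_ge0 ?pw_ge0 // ltW.
set T := (_ == _)%:R.
have hT : forall j, A t j * B y j <= T * B y j.
  move=> j; rewrite /A /B /T /=.
  have [hB|hB] := eqVneq (ix j + (x:nat)%:Z - ix l * d%:Z) (y:nat)%:Z; last first.
    by rewrite !mulr0.
  rewrite !mulr1.
  have [hA|hA] := eqVneq ((V t)%:Z + ix j * (d ^ n)%:Z) ((V s)%:Z + ix k); last first.
    by rewrite ler0n.
  case: eqP => // hne; exfalso; apply: hne.
  rewrite /= size_tuple -/n expnS.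
  move: hA hB; rewrite !PoszD !PoszM; nia.
apply: le_trans (ler_sum _ (fun j _ => hT j)) _.
rewrite -mulr_sumr -[leRHS]mulr1; apply: ler_wpM2l; first by rewrite /T ler0n.
have := (@sum_ind_le1 N (fun j : 'I_N => ix j + (x:nat)%:Z - ix l * d%:Z == (y:nat)%:Z)).
apply => i j /eqP hi /eqP hj; apply: idx_inj; lia.
Qed.


Lemma d_neq0 : d%:R != 0 :> R.
Proof. by rewrite pnatr_eq0; lia. Qed.

Lemma piw_cons (x : 'I_m.+1) w : piw R d (x :: w) = ((x:nat)%:R + piw R d w) / d%:R.
Proof.
rewrite /piw big_ord_recl /= expr1 mulrDl mulr_suml; congr (_ + _).
by apply: eq_bigr => i _; rewrite /bump /= add1n exprSr invfM mulrA.
Qed.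

Lemma piw_V w : piw R d w * (d%:R ^+ size w) = (V w)%:R.
Proof.
elim: w => [|x w IH]; first by rewrite /piw big_ord0 mul0r.
rewrite piw_cons /= exprS mulrA divfK ?d_neq0 // mulrDl IH.
by rewrite natrD natrM natrX.
Qed.

Lemma dX_neq0 n : d%:R ^+ n != 0 :> R.
Proof. by rewrite expf_eq0 (negbTE d_neq0) andbF. Qed.

Lemma piwE w : piw R d w = (V w)%:R / d%:R ^+ size w.
Proof. by rewrite -piw_V mulfK ?dX_neq0. Qed.

Lemma piw_cat (w1 w2 : seq 'I_m.+1) : piw R d (w1 ++ w2) = piw R d w1 + piw R d w2 / d%:R ^+ size w1.
Proof.
elim: w1 => [|x w1 IH] /=; first by rewrite /piw big_ord0 add0r expr0 divr1.
rewrite !piw_cons IH exprS.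
have := d_neq0; have := dX_neq0 (size w1) => h1 h2.
by field; rewrite h1 h2.
Qed.

Lemma Mx_R n : (d%:R - 1) * (Mx n)%:R = m%:R * (d%:R ^+ n - 1) :> R.
Proof.
elim: n => [|n IH]; first by rewrite Mx0 expr0 subrr !mulr0.
rewrite Mx_Sr natrD natrM natrX mulrDr IH exprS; ring.
Qed.

Lemma piw_ge0 (w : seq 'I_m.+1) : 0 <= piw R d w.
Proof. by rewrite piwE divr_ge0 // exprn_ge0. Qed.

Lemma piw_le (w : seq 'I_m.+1) : piw R d w <= m%:R / (d%:R - 1).
Proof.
have hd1 : 0 < d%:R - 1 :> R.
  by rewrite subr_gt0 (_ : 1 = 1%:R) // ltr_nat; lia.
have hD : 0 < d%:R ^+ size w :> R by rewrite exprn_gt0 // ltr0n; lia.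
rewrite piwE ler_pdivrMr // mulrAC ler_pdivlMr //.
apply: le_trans (_ : (d%:R - 1) * (Mx (size w))%:R <= _).
  rewrite mulrC; apply: ler_wpM2l; first exact: ltW.
  by rewrite ler_nat V_le.
rewrite Mx_R; apply: ler_wpM2l => //; rewrite lerBlDr lerDl //.
Qed.

Lemma eta_ge s : MM s o0 o0 <= etaw d p s.
Proof.
apply: le_trans (Mw_le_tuple s o0 o0) _.
rewrite /etaw [X in _ <= X]big_mkcond /=; apply: ler_sum => t _.
rewrite ix_o0 mul0r !addr0.
have [hV|hV] := eqVneq (V t)%:Z (V s)%:Z; last by rewrite mulr0 ; case: ifP => _; rewrite ?pw_ge0.
have -> : piw R d t == piw R d s.
  by rewrite !piwE size_tuple; apply/eqP; congr (_ / _); congr (_%:R); lia.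
by rewrite mulr1.
Qed.


Lemma p_le1 i : p i <= 1.
Proof.
rewrite -hsum; have := @term_le_sum m.+1 p i; apply => j; exact: ltW.
Qed.

Lemma entry_bound (S : R) (hS0 : 0 < S) (hinv : forall j, (p j)^-1 <= S) (r : nat)
  (sg : seq 'I_m.+1)
  (hpre : (r <= size sg)%N -> forall j : 'I_N,
     0 <= (V (take r sg))%:Z + ix j /\ (V (take r sg))%:Z + ix j <= (Mx r)%:Z) :
  forall k l, MM sg k l <= S ^+ r * ((S * (size sg)%:R + 1) ^+ aa d m * MM sg o0 o0).
Proof.
have hrho : forall i j, p i <= S * p j.
  move=> i j; apply: le_trans (p_le1 i) _.
  have hpj := hpos j.
  rewrite -(mulVf (lt0r_neq0 hpj)); apply: ler_wpM2r => //; exact: ltW.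
set pm := S^-1.
have hpm : forall j, pm <= p j.
  move=> j; rewrite /pm -div1r ler_pdivrMr //.
  have hpj := hpos j.
  rewrite -(mulfV (lt0r_neq0 hpj)); apply: ler_wpM2l => //; exact: ltW.
have hpm0 : 0 <= pm by rewrite /pm invr_ge0 ltW.
have hpm1 : pm <= 1 := le_trans (hpm ord0) (p_le1 ord0).
have hSpm : S ^+ r * pm ^+ r = 1 by rewrite -exprMn /pm mulfV ?lt0r_neq0 // expr1n.
set n := size sg.
set K := S * n%:R + 1.
have hSn : 0 <= S * n%:R by rewrite mulr_ge0 // ltW.
have hK : 1 <= K by rewrite /K lerDr.
have hSK : S * n%:R <= K by rewrite /K lerDl.
have hch : forall k, MM sg k o0 <= K ^+ aa d m * MM sg o0 o0.
  apply: chain => // k k1 e h.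
    apply: le_trans (decr S (ltW hS0) hrho sg _ _ e h) _.
    by apply: ler_wpM2r => //; apply: Mw_ge0.
  apply: le_trans (incr S (ltW hS0) hrho sg _ _ e h) _.
  by apply: ler_wpM2r => //; apply: Mw_ge0.
have h00 := Mw_ge0 sg o0 o0.
have hKa : 1 <= K ^+ aa d m := exprn_ege1 _ hK.
have hSr : 0 <= S ^+ r by rewrite exprn_ge0 // ltW.
move=> k l.
case: (leqP r n) => hrn.
  have hsz : size (take r sg) = r by rewrite size_takel.
  have e1 : MM sg k l = \sum_j MM (drop r sg) k j * MM (take r sg) j l.
    by rewrite -{1}(cat_take_drop r sg) Mw_cat mxE.
  have e2 : MM sg k o0 = \sum_j MM (drop r sg) k j * MM (take r sg) j o0.
    by rewrite -{1}(cat_take_drop r sg) Mw_cat mxE.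
  rewrite e1; apply: le_trans (_ : _ <= S ^+ r * MM sg k o0) _; last first.
    by apply: ler_wpM2l => //; apply: hch.
  rewrite e2 mulr_sumr; apply: ler_sum => j _.
  rewrite mulrCA; apply: ler_wpM2l; first exact: Mw_ge0.
  apply: le_trans (Mw_le1 _ _ _) _.
  rewrite -hSpm; apply: ler_wpM2l => //.
  have [hj1 hj2] := hpre hrn j.
  by have := Mw_lower pm hpm0 hpm (take r sg) j hj1; rewrite hsz; apply.
apply: le_trans (Mw_le1 _ _ _) _.
have hlow : pm ^+ n <= MM sg o0 o0.
  apply: Mw_lower => //; rewrite ix_o0 addr0 //.
  by have := V_le sg; lia.
have hpr : pm ^+ r <= pm ^+ n.
  rewrite -(subnKC (ltnW hrn)) exprD -[leRHS]mulr1; apply: ler_wpM2l.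
    exact: exprn_ge0.
  exact: exprn_ile1.
rewrite -hSpm; apply: ler_wpM2l => //.
apply: le_trans hpr _; apply: le_trans hlow _.
by rewrite -[X in X <= _]mul1r; apply: ler_wpM2r.
Qed.


Lemma pre_helper (v M : nat) (j : 'I_N) : (aa d m <= v)%N -> (v + aa d m <= M)%N ->
  0 <= v%:Z + ix j /\ v%:Z + ix j <= M%:Z.
Proof. by move=> h1 h2; have := idx_bnd j; lia. Qed.

Lemma main_sec (s t : R) (hs : 0 < s) (hst : s < t)
  (ht : t < m%:R / (d%:R - 1)) :
  exists C : R, 0 < C /\ exists D : R, 0 <= D /\
    forall sigma : seq 'I_m.+1,
      s <= piw R d sigma <= t ->
      opnorm1 (MM sigma) <= C * powR (size sigma)%:R D * etaw d p sigma.
Proof.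
have hdp : (0 < d)%N by lia.
have hd1n : (1 < d)%N by lia.
set S := \sum_j (p j)^-1.
have hinv : forall j, (p j)^-1 <= S.
  move=> j; have := @term_le_sum m.+1 (fun j => (p j)^-1) j; apply => i.
  by rewrite invr_ge0 ltW.
have hS0 : 0 < S by apply: lt_le_trans (hinv ord0); rewrite invr_gt0.
have hd1 : 0 < d%:R - 1 :> R.
  by rewrite subr_gt0 (_ : 1 = 1%:R) // ltr_nat.
set xi := (m%:R / (d%:R - 1) : R).
have hxi0 : 0 <= xi by rewrite divr_ge0 // ltW.
set a := (aa d m)%:R : R.
have ha0 : 0 <= a by [].
have hts : 0 < xi - t by rewrite subr_gt0.
set X := (xi + a) / s + (xi + a) / (xi - t).
have hxa : 0 <= xi + a by rewrite addr_ge0.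
have hX0 : 0 <= X by rewrite /X addr_ge0 // divr_ge0 // ltW.
set r := Num.Def.archi_bound X.
have hr : X < r%:R := archi_boundP hX0.
set E := d%:R ^+ r : R.
have hE0 : 0 < E by rewrite exprn_gt0 // ltr0n.
have hrE : r%:R <= E by rewrite /E -natrX ler_nat; apply: ltnW; apply: ltn_expl.
have hE1 : xi + a < E * s.
  rewrite -ltr_pdivrMr //; apply: le_lt_trans (_ : _ <= X) (lt_le_trans hr hrE).
  by rewrite /X lerDl divr_ge0 // ltW.
have hE2 : xi + a < E * (xi - t).
  rewrite -ltr_pdivrMr //; apply: le_lt_trans (_ : _ <= X) (lt_le_trans hr hrE).
  by rewrite /X lerDr divr_ge0 // ltW.
exists (N%:R ^+ 2 * S ^+ r * (S + 1) ^+ aa d m); split.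
  by rewrite !mulr_gt0 // exprn_gt0 // ?ltr0n // addr_gt0.
exists a; split => // sg /andP[h1 h2].
set n := size sg.
have hn : (0 < n)%N.
  rewrite lt0n; apply/negP => /eqP /size0nil e.
  by move: h1; rewrite e /piw big_ord0 => h; have := lt_le_trans hs h; rewrite ltxx.
have hpre : (r <= size sg)%N -> forall j : 'I_N,
     0 <= (V (take r sg))%:Z + ix j /\ (V (take r sg))%:Z + ix j <= (Mx r)%:Z.
  move=> hrn j.
  have hsz : size (take r sg) = r by rewrite size_takel.
  have ecat := piw_cat (take r sg) (drop r sg).
  rewrite cat_take_drop hsz -/E in ecat.
  have ep := piwE (take r sg); rewrite hsz -/E in ep.
  have hsuf0 := piw_ge0 (drop r sg).
  have hsuf1 := piw_le (drop r sg); rewrite -/xi in hsuf1.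
  have eV : (V (take r sg))%:R = E * piw R d sg - piw R d (drop r sg).
    have hE0' : E != 0 := lt0r_neq0 hE0.
    by rewrite ecat ep; field.
  have hMx : (Mx r)%:R = xi * (E - 1).
    have := Mx_R r; rewrite -/E => e; rewrite /xi mulrAC -e mulrC mulrA mulVf ?mul1r //.
    exact: lt0r_neq0.
  have hlo : (aa d m <= V (take r sg))%N.
    rewrite -(ler_nat R) eV -/a.
    have : E * s <= E * piw R d sg by apply: ler_wpM2l => //; exact: ltW.
    lra.
  have hhi : (V (take r sg) + aa d m <= Mx r)%N.
    rewrite -(ler_nat R) natrD eV hMx -/a.
    have : E * piw R d sg <= E * t by apply: ler_wpM2l => //; exact: ltW.
    nra.
  exact: pre_helper.
have hb := entry_bound S hS0 hinv r sg hpre.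
have hnR : 1 <= n%:R :> R by rewrite (_ : 1 = 1%:R) // ler_nat.
set K := S * n%:R + 1 in hb.
have hKle : K ^+ aa d m <= (S + 1) ^+ aa d m * n%:R ^+ aa d m.
  have hK1 : K <= (S + 1) * n%:R by rewrite /K mulrDl mul1r lerD2l.
  have hKn : K \in Num.nneg by rewrite nnegrE /K addr_ge0 // mulr_ge0 // ltW.
  have hSn : (S + 1) * n%:R \in Num.nneg by rewrite nnegrE mulr_ge0 // addr_ge0 // ltW.
  by rewrite -exprMn; apply: (lerXn2r (aa d m) hKn hSn hK1).
have h00 := Mw_ge0 sg o0 o0.
have heta := eta_ge sg.
apply: le_trans (@opnorm_le _ _ (MM sg)) _.
apply: le_trans (_ : _ <= \sum_(k : 'I_N) \sum_(l : 'I_N)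
   S ^+ r * (K ^+ aa d m * MM sg o0 o0)) _.
  apply: ler_sum => k _; apply: ler_sum => l _.
  by rewrite ger0_norm ?Mw_ge0 //; apply: hb.
rewrite !sumr_const card_ord mulrnn.
rewrite powR_mulrn ?ler0n // -/n.
have hSr : 0 <= S ^+ r by rewrite exprn_ge0 // ltW.
have hS1 : 0 <= (S + 1) ^+ aa d m by rewrite exprn_ge0 // addr_ge0 // ltW.
have hna : 0 <= n%:R ^+ aa d m :> R by rewrite exprn_ge0.
have hNN : 0 <= N%:R ^+ 2 :> R by rewrite exprn_ge0.
have hKa : 0 <= K ^+ aa d m by rewrite exprn_ge0 // addr_ge0 // mulr_ge0 // ltW.
rewrite -!mulrA; apply: ler_wpM2l => //.
apply: ler_wpM2l => //.
apply: ler_wpM2l => //.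
by rewrite [X in _ <= X]mulrA; apply: ler_pM.

Qed.

End S.



Theorem corollary11 (R : realType) (d m : nat) (p : 'I_m.+1 -> R)
  (hd : (3 <= d)%N) (hm : (d <= m)%N)
  (hpos : forall i, 0 < p i)
  (hsum : \sum_i p i = 1)
  (h0m : p ord0 <= p ord_max)
  (hmi : forall i : 'I_m.+1, (0 < i)%N -> (i < m)%N -> p ord_max <= p i)
  (s t : R) (hs : 0 < s) (hst : s < t) (ht : t < m%:R / (d - 1)%:R) :
  exists C : R, 0 < C /\ exists D : R, 0 <= D /\
    forall sigma : seq 'I_m.+1,
      s <= piw R d sigma <= t ->
      opnorm1 (Mw d p sigma) <= C * powR (size sigma)%:R D * etaw d p sigma.
Proof.
have hd1 : (d - 1)%:R = d%:R - 1 :> R by rewrite natrB //; lia.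
rewrite hd1 in ht.
by apply: main_sec.
Qed.
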